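(* Let $(k_n)$ be a sequence of positive integers such that $k_n^2\,(k_n)!=o(\sqrt n)$ as $n\to\infty$. Then $$\mathbb{E}\big[\mathcal{L}_{\le}(S_{k_n;n})\big]=\mathbb{E}\big[\mathcal{L}_{<}(S_{k_n;n})\big]+o(\sqrt{nk_n}),$$ and moreover $\mathcal{L}_{\le}(S_{k_n;n})-\mathcal{L}_{<}(S_{k_n;n})=o_{\mathbb P}(\sqrt{nk_n})$, i.e. for every $\delta>0$, $\mathbb P\big(\mathcal{L}_{\le}(S_{k_n;n})-\mathcal{L}_{<}(S_{k_n;n})\ge\delta\sqrt{nk_n}\big)\to0$.
   Context: A $k$-multiset permutation of size $n$ is a word $s=(s(1),\dots,s(kn))$ with letters in $\{1,\dots,n\}$ in which each letter appears exactly $k$ times, identified with the point set $\{(i,s(i)):1\le i\le kn\}$; $S_{k;n}$ is a uniformly random one. $(x,y)\prec(x',y')$ iff $x<x'$ and $y<y'$; $(x,y)\preccurlyeq(x',y')$ iff $x<x'$ and $y\le y'$. For a finite point set $\mathcal P$, $\mathcal L_<(\mathcal P)$ (resp. $\mathcal L_\le(\mathcal P)$) is the maximal length of a chain $P_1\prec\dots\prec P_L$ (resp. $P_1\preccurlyeq\dots\preccurlyeq P_L$) of points of $\mathcal P$. *)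

(* Defs.v *)
From HB Require Import structures.
From mathcomp Require Import all_boot all_order all_algebra.
From mathcomp Require Import reals.
Set Implicit Arguments. Unset Strict Implicit. Unset Printing Implicit Defensive.
Import Order.TTheory GRing.Theory Num.Theory.

(* Words of length k*n over the alphabet 'I_n (letter a : 'I_n stands for a+1).
   Position i : 'I_(k*n) stands for i+1. *)
Definition mword (k n : nat) := {ffun 'I_(k * n) -> 'I_n}.

Definition is_mperm (k n : nat) (s : mword k n) : bool :=
  [forall a : 'I_n, #|[set i | s i == a]| == k].

(* the sample space of S_{k;n} (uniform distribution on it) *)
Definition MPerm (k n : nat) : {set mword k n} := [set s | is_mperm s].

Definition strict_chain (k n : nat) (s : mword k n) (I : {set 'I_(k * n)}) : bool :=
  [forall i in I, forall j in I, (i < j)%N ==> (s i < s j)%N].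
Definition weak_chain (k n : nat) (s : mword k n) (I : {set 'I_(k * n)}) : bool :=
  [forall i in I, forall j in I, (i < j)%N ==> (s i <= s j)%N].

Definition Lstrict (k n : nat) (s : mword k n) : nat :=
  \max_(I : {set 'I_(k * n)} | strict_chain s I) #|I|.
Definition Lweak (k n : nat) (s : mword k n) : nat :=
  \max_(I : {set 'I_(k * n)} | weak_chain s I) #|I|.

Local Open Scope ring_scope.

Definition Exp (R : realType) (k n : nat) (f : mword k n -> nat) : R :=
  (\sum_(s in MPerm k n) (f s)%:R) / (#|MPerm k n|)%:R.

Definition Prob (R : realType) (k n : nat) (E : pred (mword k n)) : R :=
  (#|[set s in MPerm k n | E s]|)%:R / (#|MPerm k n|)%:R.

(* Main.v *)
Require Import Defs.
From HB Require Import structures.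
From mathcomp Require Import all_boot all_order all_algebra all_fingroup.
From mathcomp Require Import reals.
From mathcomp Require Import zify ring lra.
Import Order.TTheory GRing.Theory Num.Theory.
Set Implicit Arguments. Unset Strict Implicit. Unset Printing Implicit Defensive.

Section SeqComb.
Variables (T : eqType) (g : T -> nat).

Fixpoint pairs (c : seq T) : seq T :=
  match c with
  | x :: c' => match c' with
               | y :: t => if g x == g y then x :: y :: pairs t else pairs c'
               | [::] => [::] end
  | [::] => [::] end.

Fixpoint firsts (c : seq T) : seq T :=
  match c with
  | x :: c' => match c' with
               | y :: _ => if g x == g y then firsts c' else x :: firsts c'
               | [::] => [:: x] end
  | [::] => [::] end.

Definition dbl (l : seq nat) := flatten (map (fun a => [:: a; a]) l).

Lemma firsts_mono y t : size (firsts t) <= size (firsts (y :: t)).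
Proof.
case: t => [//|z t] /=; case: ifP => _ //=.
Qed.

Lemma strong_seq_ind (P : seq T -> Prop) :
  (forall c, (forall c', size c' < size c -> P c') -> P c) -> forall c, P c.
Proof.
move=> H c; have [m] := ubnP (size c); elim: m c => [|m IH] c //.
move=> hc; apply: H => c' hc'; apply: IH; exact: leq_trans hc' _.
Qed.

Lemma size_split c : size c <= size (firsts c) + size (pairs c).
Proof.
elim/strong_seq_ind: c => -[//|x [//|y t]] IH /=.
case: ifP => _ /=.
- have := IH t (leqW (ltnSn _)); have := firsts_mono y t; simpl; lia.
- by have := IH (y :: t) (ltnSn _); rewrite /=; lia.
Qed.

Lemma pairs_subseq c : subseq (pairs c) c.
Proof.
elim/strong_seq_ind: c => -[//|x [//|y t]] IH /=.
case: ifP => _.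
- have H := IH t (leqW (ltnSn _)); by rewrite /= !eqxx.
- have H := IH (y :: t) (ltnSn _); exact: (subseq_trans H (subseq_cons _ _)).
Qed.

Lemma firsts_subseq c : subseq (firsts c) c.
Proof.
elim/strong_seq_ind: c => -[//|x [|y t]] IH /=; first by rewrite eqxx.
case: ifP => _.
- have H := IH (y :: t) (ltnSn _); exact: (subseq_trans H (subseq_cons _ _)).
- have H := IH (y :: t) (ltnSn _); by rewrite /= !eqxx.
Qed.

Lemma pairs_dbl c : exists e, map g (pairs c) = dbl e.
Proof.
elim/strong_seq_ind: c => -[|x [|y t]] IH /=; try by exists [::].
case: ifP => [/eqP gxy|_]; last exact: (IH (y :: t) (ltnSn _)).
have [e He] := IH t (leqW (ltnSn _)).
by exists (g x :: e); rewrite /= He gxy.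
Qed.

Lemma size_dbl e : size (dbl e) = 2 * size e.
Proof. by elim: e => //= a e IH; rewrite IH mulnS. Qed.

Lemma take_dbl r e : take (2 * r) (dbl e) = dbl (take r e).
Proof.
elim: e r => [|a e IH] [|r] //.
by rewrite mulnS add2n /= IH.
Qed.

Lemma subseq_dbl e : subseq e (dbl e).
Proof.
elim: e => //= a e IH; rewrite eqxx; exact: subseq_trans IH (subseq_cons _ _).
Qed.

Variable pos : T -> nat.
Definition Rw := fun a b => (pos a < pos b) && (g a <= g b).
Definition Rs := fun a b => (pos a < pos b) && (g a < g b).

Lemma Rw_trans : transitive Rw.
Proof. move=> b a c /andP[h1 h2] /andP[h3 h4]; apply/andP; lia. Qed.
Lemma Rs_trans : transitive Rs.
Proof. move=> b a c /andP[h1 h2] /andP[h3 h4]; apply/andP; lia. Qed.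

Lemma firsts_sorted c : sorted Rw c -> sorted Rs (firsts c).
Proof.
elim/strong_seq_ind: c => -[//|x [//|y t]] IH /= /andP[hxy ht].
have IHy := IH (y :: t) (ltnSn _) ht.
case: ifP => [_ //|/negbT hne].
rewrite /= path_sortedE; last exact: Rs_trans.
rewrite IHy andbT; apply/allP => z hz.
have hz' : z \in y :: t by apply: (mem_subseq (firsts_subseq (y :: t))).
have : (z == y) \/ Rw y z.
  move: hz'; rewrite inE => /orP[/eqP->|hzt]; [by left | right].
  move: ht; rewrite /= path_sortedE; last exact: Rw_trans.
  by case/andP => /allP H _; apply: H.
case => [/eqP ->|/andP[h1 h2]]; move: hxy hne => /andP[h3 h4] hne; apply/andP.
- have : g x != g y := hne. lia.
- have : g x != g y := hne. lia.
Qed.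

End SeqComb.

Lemma pairwise_tot (T : eqType) (R : rel T) (s : seq T) x y :
  pairwise R s -> x \in s -> y \in s -> x != y -> R x y || R y x.
Proof.
elim: s => //= a s IH /andP[/allP ha hs].
rewrite !inE => /orP[/eqP->|hx] /orP[/eqP->|hy]; rewrite ?eqxx //.
- by move=> _; rewrite ha.
- by move=> _; rewrite (ha _ hx) orbT.
- exact: IH.
Qed.

Definition sv k n (s : mword k n) (i : 'I_(k * n)) : nat := s i.

Definition haspat k n r (s : mword k n) : bool :=
  [exists t : (2 * r).-tuple 'I_(k * n), exists b : r.-tuple 'I_n.+1,
    [&& sorted ltn (map val t), sorted leq (map val b)
      & map (sv s) t == dbl (map val b)]].

Lemma enum_sorted N (I : {set 'I_N}) : sorted ltn (map val (enum I)).
Proof.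
rewrite -[enum _](eq_filter (mem_enum _)).
rewrite -(eq_filter (mem_map val_inj _)) -filter_map.
by rewrite (sorted_filter ltn_trans) // unlock val_ord_enum iota_ltn_sorted.
Qed.

Lemma det_pat k n r (s : mword k n) :
  (Lstrict s + 2 * r <= Lweak s)%N -> haspat r s.
Proof.
set g := sv s; set pos := fun i : 'I_(k * n) => nat_of_ord i.
rewrite /Lweak (bigop.bigmax_eq_arg set0); last first.
  by apply/forallP => i; rewrite inE.
case: arg_maxnP; first by apply/forallP => i; rewrite inE.
move=> I hI _ hle.
set c := enum I.
have sc : sorted (Rw g pos) c.
  have h0 : sorted (fun a b : 'I_(k * n) => pos a < pos b) c.
    by have := enum_sorted I; rewrite sorted_map.
  apply: (sub_in_sorted (P := mem I)) h0; last first.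
    by apply/allP => x; rewrite mem_enum.
  move=> a b ha hb /= hab; rewrite /Rw hab /=.
  move/forallP: hI => /(_ a); rewrite ha /= => /forallP /(_ b); rewrite hb /=.
  by move/implyP/(_ hab).
set c' := firsts g c.
have sc' := firsts_sorted sc.
have uc' : uniq c'.
  apply: (sorted_uniq (@Rs_trans _ g pos)) sc'.
  by move=> x; rewrite /Rs ltnn.
have hstr : (size c' <= Lstrict s)%N.
  have -> : size c' = #|[set x in c']| by rewrite cardsE; apply/esym/card_uniqP.
  apply: leq_bigmax_cond.
  apply/forallP => i; apply/implyP => hi; apply/forallP => j; apply/implyP => hj.
  apply/implyP => hij; rewrite inE in hi; rewrite inE in hj.
  have hne : i != j by apply/eqP => e; move: hij; rewrite e ltnn.
  have pw : pairwise (Rs g pos) c' by rewrite -sorted_pairwise //; exact: Rs_trans.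
  case/orP: (pairwise_tot pw hi hj hne) => /andP[h1 h2] //.
  by move: h1; rewrite /pos ltnNge (ltnW hij).
have hcI : size c = #|I| by rewrite cardE.
set p := pairs g c.
have hsz : (size c <= size c' + size p)%N := size_split g c.
have hp : (2 * r <= size p)%N.
  move: hle; rewrite -hcI; lia.
have [e he] := pairs_dbl g c; rewrite -/p in he.
have hpsz : size p = 2 * size e by rewrite -(size_map g) he size_dbl.
have sp : sorted (Rw g pos) p.
  apply: subseq_sorted (pairs_subseq g c) sc; exact: Rw_trans.
have hte : size (take (2 * r) p) == 2 * r by rewrite size_takel.
have hlet : all (fun a => a < n.+1) (take r e).
  apply/allP => a ha.
  have : a \in map g p.
    by rewrite he; apply: (mem_subseq (subseq_dbl e)); apply: mem_take ha.
  by case/mapP => x _ ->; rewrite /g /sv; apply: leqW.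
have hbe : size (map inord (take r e) : seq 'I_n.+1) == r.
  by rewrite size_map size_takel //; lia.
have hmb : map val (map inord (take r e) : seq 'I_n.+1) = take r e.
  rewrite -map_comp; apply: map_id_in => a ha /=.
  by rewrite inordK //; move/allP: hlet; apply.
apply/existsP; exists (Tuple hte); apply/existsP; exists (Tuple hbe).
rewrite /= hmb -take_dbl -he -map_take eqxx andbT.
apply/andP; split.
- have : sorted (Rw g pos) (take (2 * r) p).
    apply: subseq_sorted (take_subseq _ _) sp; exact: Rw_trans.
  rewrite sorted_map; apply: sub_sorted => a b /andP[] //.
- have : sorted leq (map g p).
    rewrite sorted_map; apply: sub_sorted sp => a b /andP[] //.
  rewrite he => /(subseq_sorted leq_trans (subseq_dbl e)).
  exact: (subseq_sorted leq_trans (take_subseq _ _)).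
Qed.

Lemma ext_perm (T : finType) (t1 t2 : seq T) :
  uniq t1 -> uniq t2 -> size t1 = size t2 -> exists p : {perm T}, map p t1 = t2.
Proof.
move=> u1 u2 hs.
case: t1 u1 hs => [|x0 t1'] u1 hs.
  by case: t2 hs {u2} => // _; exists (1%g : {perm T}).
set t1 := x0 :: t1' in u1 hs *.
pose c (t : seq T) := t ++ [seq x <- enum T | x \notin t].
have cu t : uniq t -> uniq (c t).
  move=> ut; rewrite cat_uniq ut filter_uniq ?enum_uniq // andbT.
  by apply/hasPn => x; rewrite mem_filter => /andP[].
have cm t x : x \in c t.
  by rewrite mem_cat mem_filter mem_enum andbT; case: (x \in t).
have cs t : uniq t -> size (c t) = #|T|.
  move=> ut; rewrite -(card_uniqP (cu t ut)) cardT -cardE; apply: eq_card => x.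
  by rewrite cm.
pose f x := nth x (c t2) (index x (c t1)).
have finj : injective f.
  move=> x y; rewrite /f.
  have hx : index x (c t1) < size (c t2) by rewrite cs // -(cs t1) // index_mem.
  have hy : index y (c t1) < size (c t2) by rewrite cs // -(cs t1) // index_mem.
  rewrite (set_nth_default x y hy) => /eqP.
  rewrite (nth_uniq _ hx hy (cu _ u2)) => /eqP hxy.
  by rewrite -(nth_index x (cm t1 x)) hxy nth_index.
exists (perm finj).
apply: (@eq_from_nth _ x0); first by rewrite size_map.
move=> i; rewrite size_map => hi.
rewrite (nth_map x0) // permE /f.
have -> : index (nth x0 t1 i) (c t1) = i.
  by rewrite /c index_cat mem_nth // index_uniq.
rewrite nth_cat -hs hi; apply: set_nth_default; by rewrite -hs.
Qed.

Section Count.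
Variables k n : nat.
Local Notation N := (k * n).

Definition Cnt (t : seq 'I_N) (l : seq nat) :=
  #|[set s in MPerm k n | map (@sv k n s) t == l]|.

Lemma Cnt_sym t1 t2 l : uniq t1 -> uniq t2 -> size t1 = size t2 ->
  Cnt t1 l <= Cnt t2 l.
Proof.
move=> u1 u2 hs; have [p hp] := ext_perm u1 u2 hs.
pose F (s : mword k n) : mword k n := [ffun i => s ((p^-1)%g i)].
have Finj : injective F.
  move=> s1 s2 /ffunP h; apply/ffunP => j; have := h (p j).
  by rewrite !ffunE permK.
rewrite /Cnt -(card_imset _ Finj); apply: subset_leq_card.
apply/subsetP => s' /imsetP[s hs0 ->]; move: hs0; rewrite !inE => /andP[hm hl].
apply/andP; split.
- apply/forallP => a; move: hm => /forallP /(_ a).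
  have -> : [set i | F s i == a] = (p^-1)%g @^-1: [set j | s j == a].
    by apply/setP => i; rewrite !inE ffunE.
  by rewrite card_preimset //; exact: perm_inj.
- rewrite -hp -map_comp.
  have -> : map (@sv k n (F s) \o p) t1 = map (@sv k n s) t1.
    by apply: eq_map => x; rewrite /sv /= ffunE permK.
  exact: hl.
Qed.

Lemma card_letter s a : s \in MPerm k n -> #|[set i | @sv k n s i == a]| <= k.
Proof.
rewrite inE => /forallP hm.
case: (ltnP a n) => ha.
- have -> : [set i | sv s i == a] = [set i | s i == Ordinal ha].
    by apply/setP => i; rewrite !inE /sv.
  by rewrite (eqP (hm _)).
- rewrite (_ : [set i | sv s i == a] = set0) ?cards0 //.
  apply/setP => i; rewrite !inE /sv; apply/negbTE.
  by rewrite neq_ltn (leq_trans (ltn_ord _) ha).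
Qed.

Lemma card_fam s : s \in MPerm k n -> forall m l,
  #|[set t : m.-tuple 'I_N | map (@sv k n s) t == l]| <= k ^ m.
Proof.
move=> hs; elim => [|m IH] l.
  rewrite expn0; apply: leq_trans (max_card _) _; by rewrite card_tuple.
pose A := [set i | @sv k n s i == head 0 l].
pose B := [set t : m.-tuple 'I_N | map (@sv k n s) t == behead l].
pose G (x : 'I_N * m.-tuple 'I_N) := [tuple of x.1 :: x.2].
apply: (@leq_trans #|G @: setX A B|).
  apply: subset_leq_card; apply/subsetP => t; rewrite inE => /eqP ht.
  apply/imsetP; exists (thead t, [tuple of behead t]).
    by rewrite !inE -ht; case/tupleP: t {ht} => x t /=; rewrite !eqxx.
  by rewrite /G; apply: val_inj => /=; case/tupleP: t {ht}.
apply: (leq_trans (leq_imset_card _ _)); rewrite cardsX expnS.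
exact: leq_mul (card_letter _ hs) (IH _).
Qed.

End Count.

Lemma sum_bool_card (T : finType) (Q P : pred T) :
  \sum_(x | Q x) (P x : nat) = #|[set x | Q x && P x]|.
Proof. by rewrite -sum1dep_card big_mkcondr; apply: eq_bigr => x _; case: (P x). Qed.

Lemma sum_const_card (T : finType) (P : pred T) c :
  \sum_(x | P x) c = #|[set x | P x]| * c.
Proof. by rewrite -sum1dep_card big_distrl /=; apply: eq_bigr => x _; rewrite mul1n. Qed.

Section Count2.
Variables k n : nat.
Local Notation N := (k * n).

Lemma Cnt_sum m l :
  \sum_(u : m.-tuple 'I_N | uniq u) Cnt u l <= #|MPerm k n| * k ^ m.
Proof.
rewrite (eq_bigr (fun u : m.-tuple 'I_N => \sum_(s in MPerm k n) (map (@sv k n s) u == l : nat)));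
  last by move=> u _; rewrite sum_bool_card.
rewrite exchange_big /= -sum_nat_const; apply: leq_sum => s hs.
apply: leq_trans (card_fam hs m l).
rewrite sum_bool_card; apply: subset_leq_card; apply/subsetP => u.
by rewrite !inE => /andP[].
Qed.

Lemma Cnt_bound m (t : m.-tuple 'I_N) l : uniq t ->
  Cnt t l * N ^_ m <= #|MPerm k n| * k ^ m.
Proof.
move=> ut; apply: leq_trans (Cnt_sum m l).
have -> : N ^_ m = #|[set u : m.-tuple 'I_N | uniq u]|.
  rewrite -[N in LHS]card_ord -(card_uniq_tuples m (predT : pred 'I_N)).
  by apply: eq_card => u; rewrite !inE all_predT.
rewrite -sum1dep_card big_distrr /= muln1; apply: leq_sum => u uu.
by apply: Cnt_sym => //; rewrite !size_tuple.
Qed.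

Lemma hp_le_sum r :
  #|[set s in MPerm k n | haspat r s]| <=
  \sum_(t : (2 * r).-tuple 'I_N | sorted ltn (map val t))
    \sum_(b : r.-tuple 'I_n.+1 | sorted leq (map val b)) Cnt t (dbl (map val b)).
Proof.
rewrite (eq_bigr (fun t : (2 * r).-tuple 'I_N => \sum_(b : r.-tuple 'I_n.+1 | sorted leq (map val b))
   \sum_(s in MPerm k n) (map (@sv k n s) t == dbl (map val b) : nat)));
  last by move=> t _; apply: eq_bigr => b _; rewrite sum_bool_card.
under eq_bigr do rewrite exchange_big /=.
rewrite exchange_big /= -sum_bool_card; apply: leq_sum => s hs.
case hp: (haspat r s) => //=.
case/existsP: hp => t /existsP[b /and3P[h1 h2 h3]].
rewrite (bigD1 t) //= (bigD1 b) //= h3.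
by rewrite -addnA leq_addr.
Qed.

Lemma hp_count r :
  #|[set s in MPerm k n | haspat r s]| * (2 * r)`! <=
  'C(r + n, r) * k ^ (2 * r) * #|MPerm k n|.
Proof.
have hsum := hp_le_sum r.
have hT := card_ltn_sorted_tuples (2 * r) N.
have hB := card_sorted_tuples r n.
have [hC0|hCpos] := posnP 'C(N, 2 * r).
  move: hsum; rewrite big_pred0; first by rewrite leqn0 => /eqP ->.
  move=> t; apply/negP => ht.
  have : t \in [set t : (2 * r).-tuple 'I_N | sorted ltn (map val t)] by rewrite inE.
  move: hT; rewrite hC0 => /eqP; rewrite cards_eq0 => /eqP ->; by rewrite inE.
rewrite -(leq_pmul2l hCpos) mulnCA bin_ffact.
have -> : 'C(r + n, r) * k ^ (2 * r) * #|MPerm k n| =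
   'C(r + n, r) * (#|MPerm k n| * k ^ (2 * r)) by rewrite -mulnA (mulnC (k ^ _)).
apply: leq_trans (leq_mul hsum (leqnn _)) _.
rewrite big_distrl /=.
apply: (@leq_trans (\sum_(t : (2 * r).-tuple 'I_N | sorted ltn (map val t))
   \sum_(b : r.-tuple 'I_n.+1 | sorted leq (map val b)) (#|MPerm k n| * k ^ (2 * r)))).
  apply: leq_sum => t ht; rewrite big_distrl /=; apply: leq_sum => b _.
  apply: Cnt_bound.
  have := sorted_uniq ltn_trans ltnn ht; by rewrite map_inj_uniq //; exact: val_inj.
by rewrite !sum_const_card hT hB mulnA.
Qed.

End Count2.

Lemma ffact_le_exp m i : m ^_ i <= m ^ i.
Proof.
elim: i => [|i IH]; first by rewrite ffactn0.
rewrite ffactnSr expnSr; exact: leq_mul IH (leq_subr _ _).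
Qed.

Lemma exp2_fact i : 2 ^ i <= 2 * i`!.
Proof.
elim: i => [//|i IH]; rewrite expnS factS.
case: i IH => [//|i] IH.
move: IH; set a := 2 ^ i.+1; set f := i.+1`!; nia.
Qed.

Lemma geom2 m : \sum_(i < m.+1) 2 ^ (m - i) < 2 ^ m.+1.
Proof.
elim: m => [|m IH]; first by rewrite big_ord_recl big_ord0.
rewrite big_ord_recl subn0.
have -> : \sum_(i < m.+1) 2 ^ (m.+1 - bump 0 i) = \sum_(i < m.+1) 2 ^ (m - i).
  by apply: eq_bigr => i _; rewrite /bump /= add1n subSS.
rewrite (expnS 2 m.+1); lia.
Qed.

Lemma succ_pow m : (m + 1) ^ m <= 4 * m ^ m.
Proof.
rewrite -(leq_pmul2l (expn_gt0 2 m)) expnDn big_distrr /=.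
apply: (@leq_trans (\sum_(i < m.+1) 2 * m ^ m * 2 ^ (m - i))).
  apply: leq_sum => i _; rewrite exp1n muln1.
  have hi : i <= m by rewrite -ltnS.
  have e : 2 ^ m = 2 ^ i * 2 ^ (m - i) by rewrite -expnD subnKC.
  rewrite e; apply: (@leq_trans ('C(m, i) * 2 ^ i * m ^ (m - i) * 2 ^ (m - i))).
    by rewrite [X in X <= _](_ : _ = 'C(m, i) * 2 ^ i * m ^ (m - i) * 2 ^ (m - i)) //; ring.
  apply: leq_mul => //.
  apply: (@leq_trans (2 * m ^ i * m ^ (m - i))); last by rewrite -mulnA -expnD subnKC.
  apply: leq_mul => //.
  apply: (@leq_trans ('C(m, i) * (2 * i`!))); first exact: leq_mul (exp2_fact i).
  rewrite mulnCA bin_ffact leq_mul2l ffact_le_exp orbT //.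
rewrite -big_distrr /=.
apply: (@leq_trans (2 * m ^ m * 2 ^ m.+1)); first by rewrite leq_mul2l ltnW ?geom2 ?orbT.
by rewrite expnS; apply: eq_leq; ring.
Qed.

Lemma pow_self_fact m : m ^ m <= 4 ^ m * m`!.
Proof.
elim: m => [//|m IH].
have h1 := succ_pow m; rewrite addn1 in h1.
rewrite expnS [4 ^ _]expnS factS.
move: h1 IH; set A := m.+1 ^ m; set B := m ^ m; set C := 4 ^ m; set F := m`!.
move=> h1 h2.
have h3 : A <= 4 * (C * F) by apply: leq_trans h1 _; rewrite leq_mul2l h2 orbT.
apply: leq_trans (leq_mul (leqnn m.+1) h3) _; apply: eq_leq; ring.
Qed.

Lemma core_count k n r :
  #|[set s in MPerm k n | haspat r s]| * (r ^ 3) ^ r <=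
  (16 * (r + n) * k ^ 2) ^ r * #|MPerm k n|.
Proof.
have hc := hp_count k n r.
have hb : 'C(r + n, r) * r`! <= (r + n) ^ r by rewrite bin_ffact ffact_le_exp.
have f1 := pow_self_fact r.
have f2 := pow_self_fact (2 * r).
have e1 : (r ^ 3) ^ r = r ^ r * (r ^ r) ^ 2 by rewrite -!expnM -expnD; congr (_ ^ _); ring.
have e2 : (2 * r) ^ (2 * r) = 4 ^ r * ((r ^ r) ^ 2).
  rewrite expnM (expnMn 2 r 2) expnMn; congr (_ * _); by rewrite -!expnM mulnC.
have e3 : 4 ^ (2 * r) = 4 ^ r * 4 ^ r by rewrite -expnD addnn mul2n.
have e4 : k ^ (2 * r) = (k ^ 2) ^ r by rewrite expnM.
have e5 : (16 * (r + n) * k ^ 2) ^ r = 4 ^ r * 4 ^ r * (r + n) ^ r * (k ^ 2) ^ r.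
  rewrite !expnMn; congr (_ * _ * _); by rewrite -expnMn.
rewrite e1 e5; rewrite e2 e3 in f2; rewrite e4 in hc.
move: hc hb f1 f2.
set X := #|_|; set R := r ^ r; set F1 := r`!; set F2 := (2 * r)`!; set P := 4 ^ r.
set C := 'C(r + n, r); set K := (k ^ 2) ^ r; set M := #|MPerm k n|; set Q := (r + n) ^ r.
move=> hc hb f1 f2.
have f2' : R ^ 2 <= P * F2.
  by move: f2; rewrite -mulnA leq_pmul2l // /P expn_gt0.
apply: (@leq_trans (X * (P * F1) * (P * F2))).
  by rewrite -mulnA leq_mul // leq_mul.
apply: (@leq_trans (P * P * F1 * (C * K * M))).
  have -> : X * (P * F1) * (P * F2) = P * P * F1 * (X * F2) by ring.
  by rewrite leq_mul2l hc orbT.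
have -> : P * P * F1 * (C * K * M) = P * P * K * M * (C * F1) by ring.
apply: leq_trans (leq_mul (leqnn _) hb) _; apply: eq_leq; ring.
Qed.

Local Open Scope ring_scope.

Lemma prob_bound (R : realType) k n r : (0 < r)%N -> (r <= n)%N ->
  Prob R (@haspat k n r) <= ((32 * n * k ^ 2)%:R / (r ^ 3)%:R) ^+ r.
Proof.
move=> r0 rn; rewrite /Prob.
set X := #|_|; set M := #|MPerm k n|.
have hc := core_count k n r; rewrite -/M in hc.
have hc' : (X * (r ^ 3) ^ r <= (32 * n * k ^ 2) ^ r * M)%N.
  apply: leq_trans hc _; rewrite leq_mul2r; apply/orP; right.
  rewrite leq_exp2r // leq_mul2r; apply/orP; right; lia.
have [M0|Mpos] := posnP M.
  by rewrite M0 invr0 mulr0 exprn_ge0 // divr_ge0.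
rewrite expr_div_n ler_pdivrMr ?ltr0n //.
rewrite mulrAC ler_pdivlMr; last by rewrite exprn_gt0 // ltr0n expn_gt0 r0.
by rewrite -!natrX -!natrM ler_nat.
Qed.

Lemma Ls_le_Lw k n (s : mword k n) : (Lstrict s <= Lweak s)%N.
Proof.
apply/bigmax_leqP => I hI; apply: leq_bigmax_cond.
apply/forallP => i; apply/implyP => hi; apply/forallP => j; apply/implyP => hj.
apply/implyP => hij.
move/forallP: hI => /(_ i); rewrite hi => /forallP /(_ j); rewrite hj /= => /implyP /(_ hij).
exact: ltnW.
Qed.

Lemma Lw_le k n (s : mword k n) : (Lweak s <= k * n)%N.
Proof.
apply/bigmax_leqP => I _; apply: leq_trans (max_card _) _; by rewrite card_ord.
Qed.

Lemma diff_bound k n r (s : mword k n) :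
  (Lweak s - Lstrict s <= 2 * r + (k * n) * haspat r s)%N.
Proof.
case hp: (haspat r s).
  have := Lw_le s; rewrite /=; lia.
have : ~~ (Lstrict s + 2 * r <= Lweak s)%N by apply/negP => /det_pat; rewrite hp.
rewrite -ltnNge; lia.
Qed.

Lemma Prob_mono (R : realType) k n (E F : pred (mword k n)) :
  (forall s, s \in MPerm k n -> E s -> F s) -> Prob R E <= Prob R F.
Proof.
move=> h; rewrite /Prob ler_wpM2r ?invr_ge0 ?ler0n // ler_nat.
apply: subset_leq_card; apply/subsetP => s; rewrite inE => /andP[hs he].
by rewrite inE hs (h _ hs he).
Qed.

Lemma req_le (R : realType) (x y : R) : x = y -> x <= y.
Proof. by move->. Qed.

Lemma mid (R : realType) (b a c : R) : a <= b -> b <= c -> a <= c.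
Proof. exact: le_trans. Qed.

Lemma cube_le (R : realType) (a b : R) : 0 <= a -> a <= b -> a ^+ 3 <= b ^+ 3.
Proof.
move=> a0 ab; apply: lerXn2r => //; rewrite ?inE /= ?nnegrE //; exact: le_trans ab.
Qed.

Lemma sq_le (R : realType) (a b : R) : 0 <= b -> a ^+ 2 <= b ^+ 2 -> a <= b.
Proof.
move=> b0 h; case: (lerP 0 a) => a0; last exact: le_trans (ltW a0) b0.
by rewrite -ler_sqr // ?inE /= ?nnegrE.
Qed.

Lemma powr_le_self (R : realType) (b : R) r : (0 < r)%N -> 0 <= b -> b <= 1 -> b ^+ r <= b.
Proof.
case: r => // r _ b0 b1; rewrite exprS.
by rewrite -[X in _ <= X]mulr1 ler_wpM2l // exprn_ile1.
Qed.

Lemma part2_core (R : realType) (d e : R) k n : 0 < d -> 0 < e -> e <= 1 -> (0 < k)%N ->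
  16 <= d ^+ 2 * (n%:R * k%:R) ->
  d ^+ 2 * k%:R <= 4 * n%:R ->
  2048 ^+ 2 * k%:R <= e ^+ 2 * d ^+ 6 * n%:R ->
  Prob R (fun s : mword k n =>
     d * Num.sqrt ((n * k)%:R) <= (Lweak s)%:R - (Lstrict s)%:R) <= e.
Proof.
move=> d0 e0 e1 k0 ha hb hc.
set S := Num.sqrt _.
have S0 : 0 <= S := sqrtr_ge0 _.
have hS : S ^+ 2 = n%:R * k%:R by rewrite sqr_sqrtr ?ler0n // natrM.
set nn : R := n%:R in ha hb hc hS *; set kr : R := k%:R in ha hb hc hS *.
have k1 : 1 <= kr by rewrite /kr ler1n.
have n0 : 0 <= nn by rewrite /nn ler0n.
set x := d * S / 2.
have x0 : 0 <= x by rewrite /x; apply: divr_ge0 => //; apply: mulr_ge0 => //; exact: ltW.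
have x2 : 2 <= x.
  apply: sq_le => //; rewrite /x expr_div_n exprMn hS; lra.
have [hr1 hr2] := andP (truncn_itv x0).
set r := Num.truncn x in hr1 hr2.
have r0 : (0 < r)%N by rewrite /r truncn_gt0; lra.
have rn : (r <= n)%N.
  rewrite -(ler_nat R); apply: le_trans hr1 _; apply: sq_le => //.
  rewrite /x expr_div_n exprMn hS -/nn.
  have := ler_wpM2r n0 hb.
  lra.
apply: (le_trans (@Prob_mono R k n _ (@haspat k n r) _)).
  move=> s _ hs; apply: det_pat; rewrite -(ler_nat R) natrD natrM.
  have := Ls_le_Lw s; rewrite -(ler_nat R) => hl.
  move: hs; rewrite -/S. rewrite /x in hr1. lra.
apply: le_trans (prob_bound R k r0 rn) _.
set rr : R := r%:R in hr1 hr2.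
have rr0 : 0 < rr by rewrite /rr ltr0n.
have rrx : x / 2 <= rr by lra.
have h2048 : 2048 * kr <= e * d ^+ 3 * S.
  apply: sq_le; first by apply: mulr_ge0 => //; apply: mulr_ge0; [exact: ltW | apply: exprn_ge0; exact: ltW].
  rewrite !exprMn hS.
  have : kr * (2048 ^+ 2 * kr) <= kr * (e ^+ 2 * d ^+ 6 * nn) by rewrite ler_wpM2l // ; lra.
  move=> h; apply: (le_trans (_ : _ <= kr * (2048 ^+ 2 * kr))); first by apply: req_le; ring.
  apply: (le_trans h); apply: req_le; ring.
have hcube : (x / 2) ^+ 3 <= rr ^+ 3 by apply: cube_le => //; lra.
have hb' : (32 * n * k ^ 2)%:R / (r ^ 3)%:R <= e.
  rewrite ler_pdivrMr; last by rewrite ltr0n expn_gt0 r0.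
  rewrite !natrM -/nn -/kr -/rr.
  have h1 : e * (x / 2) ^+ 3 <= e * rr ^+ 3 by rewrite ler_wpM2l // ltW.
  have ex : e * (x / 2) ^+ 3 = e * d ^+ 3 * S * (S ^+ 2) / 64.
    by rewrite /x; field.
  have h3 : 2048 * kr * (nn * kr) <= e * d ^+ 3 * S * (nn * kr).
    by rewrite ler_wpM2r // mulr_ge0.
  rewrite hS in ex.
  have h4 : 32 * nn * (kr * kr) <= e * (x / 2) ^+ 3.
    rewrite ex ler_pdivlMr //; apply: le_trans h3; apply: req_le; ring.
  apply: le_trans h4 (le_trans h1 _); apply: req_le; ring.
have hb1 := le_trans hb' e1.
apply: le_trans (powr_le_self r0 _ _) hb' => //.
by apply: divr_ge0; rewrite ler0n.
Qed.

Lemma Ediff_le (R : realType) k n r :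
  Exp R (@Lweak k n) - Exp R (@Lstrict k n) <=
    2 * r%:R + (k * n)%:R * Prob R (@haspat k n r).
Proof.
rewrite /Exp /Prob -mulrBl -sumrB.
set M := #|MPerm k n|; set X := #|_|.
have hs : (\sum_(s in MPerm k n) (Lweak s - Lstrict s) <= 2 * r * M + k * n * X)%N.
  apply: (@leq_trans (\sum_(s in MPerm k n) (2 * r + k * n * haspat r s))).
    by apply: leq_sum => s _; exact: diff_bound.
  rewrite big_split /= sum_nat_const -big_distrr /= sum_bool_card mulnC.
  by apply: leq_add; [rewrite mulnC | apply: eq_leq; congr (_ * #|_|); apply/setP => s; rewrite !inE].
have -> : \sum_(s in MPerm k n) ((Lweak s)%:R - (Lstrict s)%:R) =
          (\sum_(s in MPerm k n) (Lweak s - Lstrict s)%N)%:R :> R.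
  rewrite natr_sum; apply: eq_bigr => s _; by rewrite natrB // Ls_le_Lw.
have h2 : ((\sum_(s in MPerm k n) (Lweak s - Lstrict s))%N)%:R <=
   ((2 * r * M + k * n * X)%N)%:R :> R by rewrite ler_nat.
apply: (le_trans (ler_wpM2r _ h2)); first by rewrite invr_ge0 ler0n.
rewrite natrD !natrM mulrDl -!mulrA.
apply: lerD.
  have [M0|Mpos] := posnP M.
    by rewrite M0 invr0 !mulr0 mulr_ge0 // ler0n.
  by rewrite mulfV ?mulr1 // pnatr_eq0 -lt0n.
by [].
Qed.

Lemma Ediff_ge0 (R : realType) k n :
  0 <= Exp R (@Lweak k n) - Exp R (@Lstrict k n).
Proof.
rewrite /Exp -mulrBl -sumrB mulr_ge0 ?invr_ge0 ?ler0n //.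
apply: sumr_ge0 => s _; rewrite subr_ge0 ler_nat; exact: Ls_le_Lw.
Qed.

Lemma part1_core (R : realType) (K e : R) k n : K = 512 * 32 -> 0 < e -> e <= 1 -> (0 < k)%N ->
  256 <= e ^+ 2 * (n%:R * k%:R) ->
  e ^+ 2 * k%:R <= 16 * n%:R ->
  K ^+ 2 * k%:R <= e ^+ 6 * n%:R ->
  2 * K ^+ 3 * k%:R ^+ 2 <= e ^+ 10 * n%:R ->
  `| Exp R (@Lweak k n) - Exp R (@Lstrict k n) | <= e * Num.sqrt ((n * k)%:R).
Proof.
move=> hK e0 e1 k0 ha hb hc hd.
have K0 : 0 < K by rewrite hK; lra.
rewrite ger0_norm ?Ediff_ge0 //.
set S := Num.sqrt _.
have S0 : 0 <= S := sqrtr_ge0 _.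
have hS : S ^+ 2 = n%:R * k%:R by rewrite sqr_sqrtr ?ler0n // natrM.
set nn : R := n%:R in ha hb hc hd hS *; set kr : R := k%:R in ha hb hc hd hS *.
have k1 : 1 <= kr by rewrite /kr ler1n.
have n0 : 0 <= nn by rewrite /nn ler0n.
set x := e * S / 4.
have x0 : 0 <= x by rewrite /x; apply: divr_ge0 => //; apply: mulr_ge0 => //; exact: ltW.
have x4 : 4 <= x.
  apply: sq_le => //; rewrite /x expr_div_n exprMn hS; lra.
have [hr1 hr2] := andP (truncn_itv x0).
set r := Num.truncn x in hr1 hr2.
have r3 : (3 <= r)%N by rewrite /r truncn_ge_nat //; lra.
have r0 : (0 < r)%N by apply: leq_trans r3.
have rn : (r <= n)%N.
  rewrite -(ler_nat R); apply: le_trans hr1 _; apply: sq_le => //.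
  rewrite /x expr_div_n exprMn hS -/nn.
  have := ler_wpM2r n0 hb.
  lra.
apply: le_trans (Ediff_le R k n r) _.
set rr : R := r%:R in hr1 hr2 *.
have rr0 : 0 < rr by rewrite /rr ltr0n.
have rrx : x / 2 <= rr by lra.
set base := (32 * n * k ^ 2)%:R / (r ^ 3)%:R : R.
have base0 : 0 <= base by apply: divr_ge0; rewrite ler0n.
have hP := prob_bound R k r0 rn; rewrite -/base in hP.
have hcube : (x / 2) ^+ 3 <= rr ^+ 3 by apply: cube_le => //; lra.
have Spos : 0 < S.
  rewrite lt0r S0 andbT; apply/eqP => S00; move: hS; rewrite S00 expr0n /= => h.
  move: ha; rewrite -h mulr0; lra.
have hbase : base * (e ^+ 3 * S) <= K * kr.
  have hbr : base * rr ^+ 3 = 32 * nn * (kr * kr).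
    rewrite /base !natrM -/nn -/kr -/rr mulfVK //.
    by rewrite !mulf_neq0 // lt0r_neq0.
  have h1 : base * (x / 2) ^+ 3 <= 32 * nn * (kr * kr).
    by rewrite -hbr ler_wpM2l.
  have ex : (x / 2) ^+ 3 = e ^+ 3 * S * S ^+ 2 / 512 by rewrite /x; field.
  rewrite ex hS in h1.
  have S2 : 0 < nn * kr by rewrite -hS exprn_gt0.
  rewrite -(ler_pM2r S2).
  apply: (mid (b := 512 * (32 * nn * (kr * kr)))); last by apply: req_le; rewrite hK; ring.
  apply: (mid (b := 512 * (base * (e ^+ 3 * S * (nn * kr) / 512)))).
    by apply: req_le; field.
  by rewrite ler_wpM2l.
have he3S : 0 < e ^+ 3 * S by rewrite mulr_gt0 // exprn_gt0.
have base1 : base <= 1.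
  have h16 : K * kr <= e ^+ 3 * S.
    apply: sq_le; first exact: ltW.
    rewrite !exprMn hS.
    have := ler_wpM2l (ler0n R k) hc; rewrite -/kr => h.
    apply: (le_trans (_ : _ <= kr * (K ^+ 2 * kr))); first by apply: req_le; ring.
    apply: (le_trans h); apply: req_le; ring.
  by rewrite -(ler_pM2r he3S) mul1r (le_trans hbase h16).
have hb3 : Prob R (@haspat k n r) <= base ^+ 3.
  apply: le_trans hP _; exact: ler_wiXn2l.
have hrr : 2 * rr <= e * S / 2 by move: hr1; rewrite /x; lra.
have hkb : (k * n)%:R * base ^+ 3 <= e * S / 2.
  rewrite natrM -/kr -/nn.
  have hb9 : base ^+ 3 * (e ^+ 3 * S) ^+ 3 <= (K * kr) ^+ 3.
    rewrite -exprMn; apply: cube_le => //; apply: mulr_ge0 => //; exact: ltW.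
  have hpos : 0 < (e ^+ 3 * S) ^+ 3 by rewrite exprn_gt0.
  rewrite -(ler_pM2r hpos).
  apply: (mid (b := kr * nn * (K * kr) ^+ 3)).
    have hkn : 0 <= kr * nn by apply: mulr_ge0; lra.
    by move: (ler_wpM2l hkn hb9); rewrite mulrA.
  have e10 : e * S / 2 * (e ^+ 3 * S) ^+ 3 = e ^+ 10 * (S ^+ 2) ^+ 2 / 2.
    by field.
  rewrite e10 hS.
  have : kr * nn * (kr * (2 * K ^+ 3 * kr ^+ 2)) <= kr * nn * (kr * (e ^+ 10 * nn)).
    apply: ler_wpM2l; first by apply: mulr_ge0; lra.
    by apply: ler_wpM2l; lra.
  move=> h; apply: (mid (b := kr * nn * (kr * (2 * K ^+ 3 * kr ^+ 2)) / 2)).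
    by apply: req_le; field.
  apply: (mid (b := kr * nn * (kr * (e ^+ 10 * nn)) / 2)).
    by rewrite ler_pM2r // ?invr_gt0 //.
  by apply: req_le; field.
have : (k * n)%:R * Prob R (@haspat k n r) <= (k * n)%:R * base ^+ 3.
  by rewrite ler_wpM2l // ler0n.
lra.
Qed.

Lemma part2_wrap (R : realType) (d e c : R) k n : 0 < d -> 0 < e -> e <= 1 -> 0 < c ->
  (0 < k)%N -> c * 16 <= d ^+ 2 -> c * d ^+ 2 <= 4 -> c * 2048 ^+ 2 <= e ^+ 2 * d ^+ 6 ->
  (k%:R) ^+ 2 <= c * n%:R ->
  Prob R (fun s : mword k n =>
     d * Num.sqrt ((n * k)%:R) <= (Lweak s)%:R - (Lstrict s)%:R) <= e.
Proof.
move=> d0 e0 e1 c0 k0 h1 h2 h3 hk.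
set nn : R := n%:R in hk *; set kr : R := k%:R in hk *.
have k1 : 1 <= kr by rewrite /kr ler1n.
have n0 : 0 <= nn by rewrite /nn ler0n.
have kk : kr <= kr ^+ 2 by rewrite expr2 ler_peMr //; lra.
have k2 : 1 <= kr ^+ 2 by lra.
have cn : kr <= c * nn by lra.
have cn1 : 1 <= c * nn by lra.
have d2 : 0 <= d ^+ 2 by apply: exprn_ge0; lra.
apply: part2_core => //.
- have a1 : c * 16 * nn <= d ^+ 2 * nn by rewrite ler_wpM2r.
  have a2 : d ^+ 2 * nn <= d ^+ 2 * nn * kr by rewrite ler_peMr // mulr_ge0.
  have -> : d ^+ 2 * (nn * kr) = d ^+ 2 * nn * kr by ring.
  lra.
- have a1 : d ^+ 2 * kr <= d ^+ 2 * (c * nn) by rewrite ler_wpM2l.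
  have a2 : c * d ^+ 2 * nn <= 4 * nn by rewrite ler_wpM2r.
  lra.
- have a1 : 2048 ^+ 2 * kr <= 2048 ^+ 2 * (c * nn) by apply: ler_wpM2l => //; apply: exprn_ge0.
  have a2 : c * 2048 ^+ 2 * nn <= e ^+ 2 * d ^+ 6 * nn by rewrite ler_wpM2r.
  lra.
Qed.

Lemma part1_wrap (R : realType) (K e c : R) k n : K = 512 * 32 -> 0 < e -> e <= 1 -> 0 < c ->
  (0 < k)%N -> c * (512 * K ^+ 3) <= e ^+ 10 -> (k%:R) ^+ 2 <= c * n%:R ->
  `| Exp R (@Lweak k n) - Exp R (@Lstrict k n) | <= e * Num.sqrt ((n * k)%:R).
Proof.
move=> hK e0 e1 c0 k0 hc hk.
set nn : R := n%:R in hk *; set kr : R := k%:R in hk *.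
have k1 : 1 <= kr by rewrite /kr ler1n.
have n0 : 0 <= nn by rewrite /nn ler0n.
have kk : kr <= kr ^+ 2 by rewrite expr2 ler_peMr //; lra.
have K1 : 1 <= K by rewrite hK; lra.
have K2 : 1 <= K ^+ 2 by rewrite exprn_ege1.
have K3 : 1 <= K ^+ 3 by rewrite exprn_ege1.
have K23 : K ^+ 2 <= K ^+ 3 by apply: ler_weXn2l.
have f1 : kr <= c * nn by lra.
have f2 : 1 <= c * nn by lra.
have cn0 : 0 <= c * nn by lra.
have g1 : c * nn <= K ^+ 3 * (c * nn) by rewrite ler_peMl.
have g2 : K ^+ 2 * (c * nn) <= K ^+ 3 * (c * nn) by rewrite ler_wpM2r.
have g3 : K ^+ 2 * kr <= K ^+ 2 * (c * nn) by rewrite ler_wpM2l // exprn_ge0 //; lra.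
have g4 : K ^+ 3 * kr ^+ 2 <= K ^+ 3 * (c * nn) by rewrite ler_wpM2l // exprn_ge0 //; lra.
have h : c * (512 * K ^+ 3) * nn <= e ^+ 10 * nn by rewrite ler_wpM2r.
have ee : 0 <= e by lra.
have p1 : e ^+ 10 <= e ^+ 6 by apply: ler_wiXn2l.
have p2 : e ^+ 6 <= e ^+ 2 by apply: ler_wiXn2l.
have p3 : e ^+ 2 <= 1 by apply: exprn_ile1.
have e20 : 0 <= e ^+ 2 by apply: exprn_ge0.
have q1 : e ^+ 10 * nn <= e ^+ 6 * nn by rewrite ler_wpM2r.
have q2 : e ^+ 6 * nn <= e ^+ 2 * nn by rewrite ler_wpM2r.
have q3 : e ^+ 2 * nn <= nn by rewrite ler_piMl.
have q4 : e ^+ 2 * kr <= kr by rewrite ler_piMl //; lra.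
have q5 : e ^+ 2 * nn <= e ^+ 2 * nn * kr by rewrite ler_peMr // mulr_ge0.
have K30 : 0 <= K ^+ 3 * (c * nn) by lra.
apply: (@part1_core R K e k n) => //.
- have -> : e ^+ 2 * (nn * kr) = e ^+ 2 * nn * kr by ring.
  lra.
- lra.
- lra.
- lra.
Qed.

Lemma k_small (R : realType) (kk : nat -> nat) (kpos : forall n, (0 < kk n)%N)
  (hk : forall eps : R, 0 < eps -> exists N : nat, forall n : nat, (N <= n)%N ->
          ((kk n ^ 2 * (kk n)`!)%N)%:R <= eps * Num.sqrt (n%:R)) :
  forall c : R, 0 < c -> exists N : nat, forall n : nat, (N <= n)%N ->
    (kk n)%:R ^+ 2 <= c * n%:R.
Proof.
move=> c c0.
set eta := Num.min c 1.
have eta0 : 0 < eta by rewrite lt_min c0 ltr01.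
have etac : eta <= c by rewrite ge_min lexx.
have eta1 : eta <= 1 by rewrite ge_min lexx orbT.
have [N HN] := hk eta eta0.
exists N => n hn; have h := HN n hn.
set kr : R := (kk n)%:R.
have k1 : 1 <= kr by rewrite /kr ler1n.
have hy : kr ^+ 2 <= ((kk n ^ 2 * (kk n)`!)%N)%:R.
  by rewrite /kr -natrX ler_nat leq_pmulr // fact_gt0.
have h2 : kr ^+ 2 <= eta * Num.sqrt n%:R := le_trans hy h.
have k2 : 1 <= kr ^+ 2 by rewrite exprn_ege1.
have sq0 : 0 <= Num.sqrt (n%:R : R) := sqrtr_ge0 _.
have h3 : kr ^+ 2 * kr ^+ 2 <= (eta * Num.sqrt n%:R) * (eta * Num.sqrt n%:R).
  apply: ler_pM => //; lra.
have e4 : (eta * Num.sqrt n%:R) * (eta * Num.sqrt n%:R) = eta * eta * n%:R.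
  by rewrite mulrACA -[Num.sqrt _ * _]expr2 sqr_sqrtr ?ler0n.
rewrite e4 in h3.
have n0 : 0 <= (n%:R : R) by rewrite ler0n.
have h4 : kr ^+ 2 <= kr ^+ 2 * kr ^+ 2 by rewrite ler_peMr //; lra.
have h5 : eta * eta * n%:R <= eta * n%:R.
  rewrite -mulrA ler_piMl // ?mulr_ge0 //; lra.
have h6 : eta * n%:R <= c * n%:R by rewrite ler_wpM2r.
lra.
Qed.

Theorem mainTheorem3 (R : realType) (kk : nat -> nat)
  (kpos : forall n, (0 < kk n)%N)
  (hk : forall eps : R, 0 < eps -> exists N : nat, forall n : nat, (N <= n)%N ->
          ((kk n ^ 2 * (kk n)`!)%N)%:R <= eps * Num.sqrt (n%:R)) :
  (forall eps : R, 0 < eps -> exists N : nat, forall n : nat, (N <= n)%N ->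
     `| Exp R (@Lweak (kk n) n) - Exp R (@Lstrict (kk n) n) |
       <= eps * Num.sqrt ((n * kk n)%:R))
  /\
  (forall delta : R, 0 < delta -> forall eps : R, 0 < eps ->
     exists N : nat, forall n : nat, (N <= n)%N ->
       Prob R (fun s : mword (kk n) n =>
         delta * Num.sqrt ((n * kk n)%:R) <= (Lweak s)%:R - (Lstrict s)%:R) <= eps).
Proof.
have ks := k_small kpos hk.
split.
- move=> eps eps0.
  set e := Num.min eps 1.
  have e0 : 0 < e by rewrite lt_min eps0 ltr01.
  have ee : e <= eps by rewrite ge_min lexx.
  have e1 : e <= 1 by rewrite ge_min lexx orbT.
  set K : R := 512 * 32.
  have K0 : 0 < K by rewrite /K; lra.
  set c := e ^+ 10 / (512 * K ^+ 3).
  have c0 : 0 < c by rewrite /c divr_gt0 // ?exprn_gt0 // mulr_gt0 // exprn_gt0.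
  have hc : c * (512 * K ^+ 3) <= e ^+ 10.
    by rewrite /c mulfVK // mulf_neq0 // ?expf_neq0 // lt0r_neq0.
  have [N HN] := ks c c0.
  exists N => n hn.
  apply: le_trans (part1_wrap (K := K) (c := c) _ e0 e1 c0 (kpos n) hc (HN n hn)) _ => //.
  rewrite ler_wpM2r //; exact: sqrtr_ge0.
- move=> d d0 eps eps0.
  set e := Num.min eps 1.
  have e0 : 0 < e by rewrite lt_min eps0 ltr01.
  have ee : e <= eps by rewrite ge_min lexx.
  have e1 : e <= 1 by rewrite ge_min lexx orbT.
  have d2 : 0 < d ^+ 2 by rewrite exprn_gt0.
  set c := Num.min (Num.min (d ^+ 2 / 16) (4 / d ^+ 2)) (e ^+ 2 * d ^+ 6 / 2048 ^+ 2).
  have c0 : 0 < c.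
    rewrite /c !lt_min !divr_gt0 ?exprn_gt0 //; try lra.
    by rewrite mulr_gt0 // exprn_gt0.
  have ca : c <= d ^+ 2 / 16 by rewrite /c !ge_min lexx.
  have cb : c <= 4 / d ^+ 2 by rewrite /c !ge_min lexx !orbT.
  have cc : c <= e ^+ 2 * d ^+ 6 / 2048 ^+ 2 by rewrite /c ge_min lexx orbT.
  have [N HN] := ks c c0.
  exists N => n hn.
  apply: le_trans (part2_wrap (c := c) d0 e0 e1 c0 (kpos n) _ _ _ (HN n hn)) ee.
  + by move: ca; rewrite ler_pdivlMr.
  + by move: cb; rewrite ler_pdivlMr.
  + move: cc; rewrite ler_pdivlMr //; exact: exprn_gt0.
Qed.
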